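(* Fix $n\ge2$, $1\le m\le n-1$ and $\sigma\ge0$. Let $u_m(\cdot;\sigma)$ be the eigenfunction for $\lambda_m(\sigma)$ normalized so that $u_m(x;\sigma)=\sin(\gamma_m(\sigma)x)$ for $x\in I_1$. Then for every $1\le k\le n-1$, $$u_m(x_k;\sigma)=\frac{\sin\left(\frac{\gamma_m(\sigma)}{n}\right)}{\sin\left(\frac{m\pi}{n}\right)}\,\sin\left(\tfrac{km\pi}{n}\right)=\frac{\sin\left(\frac{\gamma_m(\sigma)}{n}\right)}{\sin\left(\frac{m\pi}{n}\right)}\,u_m(x_k;0),$$ where $u_m(x;0)=\sin(m\pi x)$.
   Context: Fix an integer $n\ge2$. Set $x_k=k/n$ for $0\le k\le n$ and $I_k=[x_{k-1},x_k]$ for $1\le k\le n$. For $\sigma\ge 0$, the spectral flow problem is the eigenvalue problem of finding $\lambda\in\mathbb{R}$ and a nonzero continuous function $u:[0,1]\to\mathbb{R}$, smooth on each open interval $(x_{k-1},x_k)$, such that $-u''=\lambda u$ on each $(x_{k-1},x_k)$, $u(0)=u(1)=0$, and for each $1\le k\le n-1$: $u$ is continuous at $x_k$ and $u'(x_k^+)-u'(x_k^-)=\sigma\,u(x_k)$, where $\pm$ denote right/left one-sided limits. For each $\sigma\ge0$ the eigenvalues are real, positive and simple, and are listed increasingly as $\lambda_1(\sigma)<\lambda_2(\sigma)<\cdots$; at $\sigma=0$, $\lambda_m(0)=m^2\pi^2$ with eigenfunction $\sin(m\pi x)$. We write $\gamma_m(\sigma)=\sqrt{\lambda_m(\sigma)}\ge0$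 and $u_m(x;\sigma)$ for an eigenfunction associated with $\lambda_m(\sigma)$. *)

(* Defs.v *)
From Stdlib Require Import Reals Lra List.
From Coquelicot Require Import Coquelicot.
Open Scope R_scope.

Definition xk (n k : nat) : R := INR k / INR n.

Definition in_open_cell (n k : nat) (x : R) : Prop :=
  xk n (k - 1) < x < xk n k.

Definition is_eigenfunction (n : nat) (sigma lam : R) (u : R -> R) : Prop :=
  (forall x, 0 <= x <= 1 ->
     filterlim u (within (fun y => 0 <= y <= 1) (locally x)) (locally (u x))) /\
  (exists x, 0 <= x <= 1 /\ u x <> 0) /\
  (forall k, (1 <= k <= n)%nat -> forall x, in_open_cell n k x ->
     (forall p : nat, ex_derive_n u p x) /\
     - Derive_n u 2 x = lam * u x) /\
  u 0 = 0 /\ u 1 = 0 /\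
  (forall k, (1 <= k <= n - 1)%nat ->
     exists dplus dminus : R,
       filterlim (Derive u) (at_right (xk n k)) (locally dplus) /\
       filterlim (Derive u) (at_left (xk n k)) (locally dminus) /\
       dplus - dminus = sigma * u (xk n k)).

Definition is_eigenvalue (n : nat) (sigma lam : R) : Prop :=
  exists u, is_eigenfunction n sigma lam u.

(* lam is the m-th eigenvalue lambda_m(sigma) (eigenvalues listed increasingly,
   m >= 1): lam is an eigenvalue and exactly m-1 eigenvalues are smaller. *)
Definition is_mth_eigenvalue (n : nat) (sigma : R) (m : nat) (lam : R) : Prop :=
  is_eigenvalue n sigma lam /\
  exists l : list R, NoDup l /\ length l = (m - 1)%nat /\
    (forall mu, In mu l <-> (is_eigenvalue n sigma mu /\ mu < lam)).

(* Main.v *)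
Require Import Defs.
From Stdlib Require Import Reals Lra List Lia ZArith.
From Stdlib Require Import ClassicalEpsilon.
From Coquelicot Require Import Coquelicot.
Open Scope R_scope.

Definition Cf (lam x : R) : R :=
  if Rlt_dec 0 lam then cos (sqrt lam * x)
  else if Rlt_dec lam 0 then (exp (sqrt (-lam) * x) + exp (- (sqrt (-lam) * x))) / 2
  else 1.
Definition Sf (lam x : R) : R :=
  if Rlt_dec 0 lam then sin (sqrt lam * x) / sqrt lam
  else if Rlt_dec lam 0 then (exp (sqrt (-lam) * x) - exp (- (sqrt (-lam) * x))) / (2 * sqrt (-lam))
  else x.

Lemma Cf_deriv lam x : is_derive (Cf lam) x (- lam * Sf lam x).
Proof.
  unfold Cf, Sf; destruct (Rlt_dec 0 lam) as [H|H].
  - assert (Hs : 0 < sqrt lam) by (apply sqrt_lt_R0; lra).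
    auto_derive; auto. set (q := sqrt lam) in *. assert (Hl : lam = q*q) by (unfold q; rewrite sqrt_sqrt; lra).
    rewrite Hl. field. lra.
  - destruct (Rlt_dec lam 0) as [H2|H2].
    + assert (Hs2 : 0 < sqrt (-lam)) by (apply sqrt_lt_R0; lra).
      auto_derive; auto. set (q := sqrt (-lam)) in *. assert (Hl : lam = -(q*q)) by (unfold q; rewrite sqrt_sqrt; lra).
    rewrite Hl. field. lra.
    + assert (lam = 0) by lra. subst. auto_derive; auto. ring.
Qed.

Lemma Sf_deriv lam x : is_derive (Sf lam) x (Cf lam x).
Proof.
  unfold Cf, Sf; destruct (Rlt_dec 0 lam) as [H|H].
  - assert (Hs : 0 < sqrt lam) by (apply sqrt_lt_R0; lra).
    auto_derive; auto. field. lra.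
  - destruct (Rlt_dec lam 0) as [H2|H2].
    + assert (Hs2 : 0 < sqrt (-lam)) by (apply sqrt_lt_R0; lra).
      auto_derive; auto. field. lra.
    + auto_derive; auto.
Qed.

Lemma CS_id lam x : Cf lam x ^ 2 + lam * Sf lam x ^ 2 = 1.
Proof.
  unfold Cf, Sf; destruct (Rlt_dec 0 lam) as [H|H].
  - assert (Hs : 0 < sqrt lam) by (apply sqrt_lt_R0; lra).
    set (q := sqrt lam) in *. assert (Hl : lam = q*q) by (unfold q; rewrite sqrt_sqrt; lra).
    replace (lam * (sin (q * x) / q) ^ 2) with (sin (q * x) ^ 2)
      by (rewrite Hl; field; lra).
    rewrite Rplus_comm. pose proof (sin2_cos2 (q * x)). unfold Rsqr in H0. lra.
  - destruct (Rlt_dec lam 0) as [H2|H2].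
    + assert (Hs2 : 0 < sqrt (-lam)) by (apply sqrt_lt_R0; lra).
      set (a := sqrt (-lam) * x).
      assert (He : exp a * exp (-a) = 1) by (rewrite <- exp_plus; replace (a + -a) with 0 by ring; apply exp_0).
      set (q := sqrt (-lam)) in *. assert (Hl : lam = -(q*q)) by (unfold q; rewrite sqrt_sqrt; lra).
      rewrite Hl.
      field_simplify; [|lra]. replace (16 * exp a * exp (- a) * q ^ 2) with (16 * q^2 * (exp a * exp (-a))) by ring. rewrite He. field. lra.
    + assert (lam = 0) by lra; subst; ring.
Qed.

Lemma Cf0 lam : Cf lam 0 = 1.
Proof. unfold Cf; destruct (Rlt_dec 0 lam); [|destruct (Rlt_dec lam 0)].
  rewrite Rmult_0_r, cos_0; auto. rewrite Rmult_0_r, Ropp_0, exp_0; field. auto. Qed.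
Lemma Sf0 lam : Sf lam 0 = 0.
Proof. unfold Sf; destruct (Rlt_dec 0 lam); [|destruct (Rlt_dec lam 0)].
  rewrite Rmult_0_r, sin_0; field. apply Rgt_not_eq, sqrt_lt_R0; lra.
  rewrite Rmult_0_r, Ropp_0, exp_0; field. apply Rgt_not_eq, sqrt_lt_R0; lra. auto. Qed.

Lemma CS_nonpos lam x : lam <= 0 -> 0 < x -> 1 <= Cf lam x /\ 0 < Sf lam x.
Proof.
  intros Hl Hx. unfold Cf, Sf; destruct (Rlt_dec 0 lam) as [H|H]; [lra|].
  destruct (Rlt_dec lam 0) as [H2|H2]; [|lra].
  assert (Hs2 : 0 < sqrt (-lam)) by (apply sqrt_lt_R0; lra).
  set (a := sqrt (-lam) * x).
  assert (Ha : 0 < a) by (unfold a; nra).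
  assert (He : exp (a/2) * exp (-(a/2)) = 1) by (rewrite <- exp_plus; replace (a/2 + -(a/2)) with 0 by ring; apply exp_0).
  assert (E1 : exp a = exp (a/2) * exp (a/2)) by (rewrite <- exp_plus; f_equal; field).
  assert (E2 : exp (-a) = exp (-(a/2)) * exp (-(a/2))) by (rewrite <- exp_plus; f_equal; field).
  assert (exp (-a) < exp a) by (apply exp_increasing; lra).
  split.
  - rewrite E1, E2. pose proof (exp_pos (a/2)). pose proof (exp_pos (-(a/2))).
    assert (0 <= (exp (a/2) - exp (-(a/2)))^2) by (apply pow2_ge_0). nra.
  - apply Rdiv_lt_0_compat; lra.
Qed.

Lemma bound_aux (p u v : R) : 2 * u * v * p <= (Rabs p + 1) * (u^2 + v^2) /\
  - (2 * u * v * p) <= (Rabs p + 1) * (u^2 + v^2).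
Proof.
  assert (0 <= (u - v)^2) by apply pow2_ge_0.
  assert (0 <= (u + v)^2) by apply pow2_ge_0.
  assert (0 <= u^2 + v^2) by nra.
  destruct (Rle_dec 0 p).
  - rewrite Rabs_pos_eq by lra. split; nra.
  - rewrite Rabs_left by lra. split; nra.
Qed.

Lemma ode_unique (a b lam c : R) (g g1 : R -> R) :
  a < c < b ->
  (forall x, a < x < b -> is_derive g x (g1 x) /\ is_derive g1 x (-lam * g x)) ->
  g c = 0 -> g1 c = 0 -> forall x, a < x < b -> g x = 0.
Proof.
  intros Hc Hd H0 H1 x Hx.
  set (K := Rabs (1 - lam) + 1).
  set (E := fun y => g y ^ 2 + g1 y ^ 2).
  assert (HE : forall y, a < y < b -> is_derive E y (2 * g y * g1 y * (1 - lam))).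
  { intros y Hy. destruct (Hd y Hy) as [D1 D2]. unfold E.
    pose proof (is_derive_plus _ _ _ _ _ (is_derive_pow g 2 y _ D1) (is_derive_pow g1 2 y _ D2)) as X.
    simpl in X. unfold plus in X; simpl in X.
    replace (2 * g y * g1 y * (1 - lam)) with
      ((1 + 1) * g1 y * (g y * 1) + (1 + 1) * (- lam * g y) * (g1 y * 1)) by ring.
    exact X. }
  assert (EC : E c = 0) by (unfold E; rewrite H0, H1; ring).
  assert (Epos : forall y, 0 <= E y) by (intros; unfold E; pose proof (pow2_ge_0 (g y)); pose proof (pow2_ge_0 (g1 y)); lra).
  cut (E x <= 0).
  { intro HEx. unfold E in HEx. pose proof (pow2_ge_0 (g x)); pose proof (pow2_ge_0 (g1 x)). nra. }
  destruct (Rtotal_order c x) as [Hlt|[Heq|Hgt]].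
  - set (F := fun y => E y * exp (- K * y)).
    assert (HF : forall y, c <= y <= x -> derivable_pt_lim F y
       ((2 * g y * g1 y * (1 - lam)) * exp (- K * y) + E y * (- K * exp (- K * y)))).
    { intros y Hy. apply is_derive_Reals. unfold F.
      apply (is_derive_mult E (fun y => exp (- K * y))). apply HE; lra.
      auto_derive; auto. ring. intros; apply Rmult_comm. }
    destruct (MVT_cor2 F _ c x Hlt HF) as [z [Hz1 Hz2]].
    unfold F in Hz1. rewrite EC in Hz1.
    destruct (bound_aux (1 - lam) (g z) (g1 z)) as [B1 B2].
    fold K in B1. change (g z ^ 2 + g1 z ^ 2) with (E z) in B1.
    pose proof (exp_pos (- K * z)). pose proof (exp_pos (- K * x)).
    assert (((2 * g z * g1 z * (1 - lam)) * exp (- K * z) + E z * (- K * exp (- K * z))) <= 0) by nra.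
    nra.
  - subst. lra.
  - set (F := fun y => E y * exp (K * y)).
    assert (HF : forall y, x <= y <= c -> derivable_pt_lim F y
       ((2 * g y * g1 y * (1 - lam)) * exp (K * y) + E y * (K * exp (K * y)))).
    { intros y Hy. apply is_derive_Reals. unfold F.
      apply (is_derive_mult E (fun y => exp (K * y))). apply HE; lra.
      auto_derive; auto. ring. intros; apply Rmult_comm. }
    destruct (MVT_cor2 F _ x c Hgt HF) as [z [Hz1 Hz2]].
    unfold F in Hz1. rewrite EC in Hz1.
    destruct (bound_aux (1 - lam) (g z) (g1 z)) as [B1 B2].
    fold K in B2. change (g z ^ 2 + g1 z ^ 2) with (E z) in B2.
    pose proof (exp_pos (K * z)). pose proof (exp_pos (K * x)).
    assert (0 <= ((2 * g z * g1 z * (1 - lam)) * exp (K * z) + E z * (K * exp (K * z)))) by nra.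
    nra.
Qed.

Lemma Cf_shift lam a x : is_derive (fun y => Cf lam (y - a)) x (-lam * Sf lam (x - a)).
Proof.
  pose proof (is_derive_comp (Cf lam) (fun y => y - a) x _ 1 (Cf_deriv lam (x - a))) as X.
  assert (D : is_derive (fun y : R => y - a) x 1) by (auto_derive; auto; ring).
  specialize (X D). unfold scal in X; simpl in X; unfold mult in X; simpl in X.
  rewrite Rmult_1_l in X. exact X.
Qed.
Lemma Sf_shift lam a x : is_derive (fun y => Sf lam (y - a)) x (Cf lam (x - a)).
Proof.
  pose proof (is_derive_comp (Sf lam) (fun y => y - a) x _ 1 (Sf_deriv lam (x - a))) as X.
  assert (D : is_derive (fun y : R => y - a) x 1) by (auto_derive; auto; ring).
  specialize (X D). unfold scal in X; simpl in X; unfold mult in X; simpl in X.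
  rewrite Rmult_1_l in X. exact X.
Qed.

Lemma comb_deriv (p q : R) (f g : R -> R) x df dg :
  is_derive f x df -> is_derive g x dg ->
  is_derive (fun y => p * f y + q * g y) x (p * df + q * dg).
Proof.
  intros Hf Hg.
  pose proof (is_derive_plus _ _ _ _ _ (is_derive_scal _ x p _ Hf) (is_derive_scal _ x q _ Hg)) as X.
  exact X.
Qed.

Lemma sol_deriv lam al be a x :
  is_derive (fun y => al * Cf lam (y - a) + be * Sf lam (y - a)) x
    (-lam * al * Sf lam (x - a) + be * Cf lam (x - a)).
Proof.
  replace (-lam * al * Sf lam (x - a) + be * Cf lam (x - a)) with
    (al * (-lam * Sf lam (x - a)) + be * Cf lam (x - a)) by ring.
  apply comb_deriv; [apply Cf_shift | apply Sf_shift].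
Qed.
Lemma sol_deriv2 lam al be a x :
  is_derive (fun y => -lam * al * Sf lam (y - a) + be * Cf lam (y - a)) x
    (-lam * (al * Cf lam (x - a) + be * Sf lam (x - a))).
Proof.
  replace (-lam * (al * Cf lam (x - a) + be * Sf lam (x - a))) with
    ((-lam * al) * Cf lam (x - a) + be * (-lam * Sf lam (x - a))) by ring.
  apply comb_deriv; [apply Sf_shift | apply Cf_shift].
Qed.

Definition cmid n k := (xk n (k-1) + xk n k) / 2.
Definition dd n := / (2 * INR n).
Definition al n lam u k := u (cmid n k) * Cf lam (dd n) - Derive u (cmid n k) * Sf lam (dd n).
Definition be n lam u k := lam * u (cmid n k) * Sf lam (dd n) + Derive u (cmid n k) * Cf lam (dd n).

Lemma INR_pred k : (1 <= k)%nat -> INR (k - 1) = INR k - 1.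
Proof. intros. rewrite minus_INR by lia. simpl. ring. Qed.

Lemma xk_step n k : (1 <= n)%nat -> (1 <= k)%nat -> xk n k - xk n (k - 1) = / INR n.
Proof.
  intros Hn Hk. unfold xk. rewrite INR_pred by lia.
  assert (0 < INR n) by (apply lt_0_INR; lia). field. lra.
Qed.

Lemma cell_rep n sigma lam u k :
  (1 <= n)%nat -> is_eigenfunction n sigma lam u -> (1 <= k <= n)%nat ->
  forall x, in_open_cell n k x ->
  u x = al n lam u k * Cf lam (x - xk n (k-1)) + be n lam u k * Sf lam (x - xk n (k-1)) /\
  Derive u x = -lam * al n lam u k * Sf lam (x - xk n (k-1)) + be n lam u k * Cf lam (x - xk n (k-1)).
Proof.
  intros Hn [_ [_ [Hode _]]] Hk.
  set (a := xk n (k-1)). set (b := xk n k).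
  set (A := al n lam u k). set (Bv := be n lam u k).
  assert (Hab : b - a = / INR n) by (apply xk_step; lia).
  assert (0 < INR n) by (apply lt_0_INR; lia).
  assert (0 < / INR n) by (apply Rinv_0_lt_compat; lra).
  assert (Hu : forall x, a < x < b -> is_derive u x (Derive u x) /\ is_derive (Derive u) x (- lam * u x)).
  { intros x Hx. destruct (Hode k Hk x Hx) as [Hex Heq].
    split.
    - apply Derive_correct. exact (Hex 1%nat).
    - assert (E : Derive (Derive u) x = - lam * u x) by (change (Derive_n u 2 x) with (Derive (Derive u) x) in Heq; lra).
      rewrite <- E. apply Derive_correct. exact (Hex 2%nat). }
  set (g := fun y => u y - (A * Cf lam (y - a) + Bv * Sf lam (y - a))).
  set (g1 := fun y => Derive u y - (-lam * A * Sf lam (y - a) + Bv * Cf lam (y - a))).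
  assert (Hc : a < cmid n k < b) by (unfold cmid; fold a b; lra).
  assert (Hcd : cmid n k - a = dd n) by (unfold cmid, dd; fold a b; replace b with (a + / INR n) by lra; field; lra).
  pose proof (CS_id lam (dd n)) as Hid.
  assert (G0 : forall x, a < x < b -> g x = 0).
  { apply (ode_unique a b lam (cmid n k) g g1 Hc).
    - intros x Hx. destruct (Hu x Hx) as [D1 D2]. split.
      + unfold g, g1. apply (is_derive_minus u _ x). exact D1. apply sol_deriv.
      + unfold g1, g.
        replace (- lam * (u x - (A * Cf lam (x - a) + Bv * Sf lam (x - a)))) with
          (- lam * u x - (-lam * (A * Cf lam (x - a) + Bv * Sf lam (x - a)))) by ring.
        apply (is_derive_minus (Derive u) _ x). exact D2. apply sol_deriv2.
    - unfold g. rewrite Hcd. unfold A, Bv, al, be.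
      set (C0 := Cf lam (dd n)) in *. set (S0 := Sf lam (dd n)) in *.
      set (U := u (cmid n k)). set (U1 := Derive u (cmid n k)).
      transitivity (U * (1 - (C0 ^ 2 + lam * S0 ^ 2))); [ring|]. rewrite Hid; ring.
    - unfold g1. rewrite Hcd. unfold A, Bv, al, be.
      set (C0 := Cf lam (dd n)) in *. set (S0 := Sf lam (dd n)) in *.
      set (U := u (cmid n k)). set (U1 := Derive u (cmid n k)).
      transitivity (U1 * (1 - (C0 ^ 2 + lam * S0 ^ 2))); [ring|]. rewrite Hid; ring. }
  assert (G1 : forall x, a < x < b -> g1 x = 0).
  { intros x Hx.
    assert (HD : is_derive g x (g1 x)).
    { destruct (Hu x Hx) as [D1 D2]. unfold g, g1. apply (is_derive_minus u _ x). exact D1. apply sol_deriv. }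
    assert (HD0 : is_derive g x 0).
    { apply (is_derive_ext_loc (fun _ => 0)).
      - apply (locally_open (fun y => a < y < b)).
        + apply open_and; [apply open_gt | apply open_lt].
        + intros y Hy. symmetry. apply G0. exact Hy.
        + exact Hx.
      - auto_derive; auto. }
    pose proof (is_derive_unique _ _ _ HD) as E1. pose proof (is_derive_unique _ _ _ HD0) as E2.
    congruence. }
  intros x Hx. split.
  - pose proof (G0 x Hx) as E. unfold g in E. lra.
  - pose proof (G1 x Hx) as E. unfold g1 in E. lra.
Qed.

Lemma small_zero (z : R) : (forall eps, 0 < eps -> Rabs z < 2 * eps) -> z = 0.
Proof.
  intros H. destruct (Req_dec z 0) as [E|E]; auto.
  assert (Hz : 0 < Rabs z) by (apply Rabs_pos_lt; auto).
  specialize (H (Rabs z / 2) ltac:(lra)). lra.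
Qed.

Lemma lim_from_cell (u f : R -> R) a b p :
  a < b -> 0 <= a -> b <= 1 -> (p = a \/ p = b) ->
  (forall x, a < x < b -> u x = f x) -> continuous f p ->
  filterlim u (within (fun y => 0 <= y <= 1) (locally p)) (locally (u p)) -> u p = f p.
Proof.
  intros Hab Ha Hb Hp Huf Hf Hu.
  assert (Z : u p - f p = 0); [|lra].
  apply small_zero. intros eps He.
  pose proof (proj1 (filterlim_locally u (u p)) Hu (mkposreal eps He)) as H1.
  pose proof (proj1 (filterlim_locally f (f p)) Hf (mkposreal eps He)) as H2.
  unfold within in H1.
  destruct (filter_and _ _ H1 H2) as [d Hd]. simpl in Hd.
  set (m := Rmin (d / 2) ((b - a) / 2)).
  assert (Hm1 : 0 < m) by (unfold m; apply Rmin_pos; [destruct d; simpl; lra | lra]).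
  assert (Hm2 : m <= d / 2) by apply Rmin_l.
  assert (Hm3 : m <= (b - a) / 2) by apply Rmin_r.
  assert (Hd0 : 0 < d) by (destruct d; simpl; lra).
  destruct Hp as [Hp|Hp]; subst p.
  - destruct (Hd (a + m)) as [A1 A2].
    + change (Rabs (a + m - a) < d). rewrite Rabs_pos_eq; lra.
    + specialize (A1 ltac:(lra)). change (Rabs (u (a+m) - u a) < eps) in A1.
      change (Rabs (f (a+m) - f a) < eps) in A2.
      rewrite Huf in A1 by lra.
      apply Rabs_def2 in A1; apply Rabs_def2 in A2; apply Rabs_def1; lra.
  - destruct (Hd (b - m)) as [A1 A2].
    + change (Rabs (b - m - b) < d). rewrite Rabs_left; lra.
    + specialize (A1 ltac:(lra)). change (Rabs (u (b-m) - u b) < eps) in A1.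
      change (Rabs (f (b-m) - f b) < eps) in A2.
      rewrite Huf in A1 by lra.
      apply Rabs_def2 in A1; apply Rabs_def2 in A2; apply Rabs_def1; lra.
Qed.

Lemma lim_right_cell (D f : R -> R) a b :
  a < b -> (forall y, a < y < b -> D y = f y) -> continuous f a ->
  filterlim D (at_right a) (locally (f a)).
Proof.
  intros Hab HD Hf.
  apply (filterlim_ext_loc f D).
  - exists (mkposreal (b - a) ltac:(lra)). intros y Hy Hay. simpl in Hy.
    change (Rabs (y - a) < b - a) in Hy. rewrite Rabs_pos_eq in Hy by lra.
    symmetry; apply HD; lra.
  - eapply filterlim_filter_le_1; [apply filter_le_within | exact Hf].
Qed.

Lemma lim_left_cell (D f : R -> R) a b :
  a < b -> (forall y, a < y < b -> D y = f y) -> continuous f b ->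
  filterlim D (at_left b) (locally (f b)).
Proof.
  intros Hab HD Hf.
  apply (filterlim_ext_loc f D).
  - exists (mkposreal (b - a) ltac:(lra)). intros y Hy Hay. simpl in Hy.
    change (Rabs (y - b) < b - a) in Hy. rewrite Rabs_left in Hy by lra.
    symmetry; apply HD; lra.
  - eapply filterlim_filter_le_1; [apply filter_le_within | exact Hf].
Qed.

Lemma sol_cont lam al be a x : continuous (fun y => al * Cf lam (y - a) + be * Sf lam (y - a)) x.
Proof. apply (@ex_derive_continuous R_AbsRing R_NormedModule). eexists. apply sol_deriv. Qed.
Lemma sol_cont1 lam al be a x : continuous (fun y => -lam * al * Sf lam (y - a) + be * Cf lam (y - a)) x.
Proof. apply (@ex_derive_continuous R_AbsRing R_NormedModule). eexists. apply sol_deriv2. Qed.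

Lemma xk_0 n : xk n 0 = 0.
Proof. unfold xk. simpl. unfold Rdiv. ring. Qed.
Lemma xk_n n : (1 <= n)%nat -> xk n n = 1.
Proof. intros. unfold xk. assert (0 < INR n) by (apply lt_0_INR; lia). field. lra. Qed.
Lemma xk_bounds n k : (1 <= n)%nat -> (k <= n)%nat -> 0 <= xk n k <= 1.
Proof.
  intros. unfold xk. assert (0 < INR n) by (apply lt_0_INR; lia).
  pose proof (pos_INR k). assert (INR k <= INR n) by (apply le_INR; lia).
  split. apply Rdiv_le_0_compat; lra. apply (Rmult_le_reg_r (INR n)); auto.
  unfold Rdiv. rewrite Rmult_assoc, Rinv_l by lra. lra.
Qed.
Lemma xk_lt n k : (1 <= n)%nat -> xk n (k - 1) < xk n k \/ (k = 0)%nat.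
Proof. Abort.

Section Node.
Variables (n : nat) (sigma lam : R) (u : R -> R).
Hypothesis Hn : (2 <= n)%nat.
Hypothesis He : is_eigenfunction n sigma lam u.

Let c := Cf lam (/ INR n).
Let s := Sf lam (/ INR n).

Lemma Hn0_node : 0 < INR n.
Proof. apply lt_0_INR; lia. Qed.

Lemma cell_lt k : (1 <= k)%nat -> xk n (k - 1) < xk n k.
Proof. intros. pose proof (xk_step n k ltac:(lia) H). pose proof Hn0_node.
  assert (0 < / INR n) by (apply Rinv_0_lt_compat; lra). lra. Qed.

Lemma N1 k : (1 <= k <= n)%nat -> u (xk n (k - 1)) = al n lam u k.
Proof.
  intros Hk. destruct He as [Hc _].
  pose proof (cell_lt k ltac:(lia)) as Hlt.
  assert (B1 := xk_bounds n (k-1) ltac:(lia) ltac:(lia)).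
  assert (B2 := xk_bounds n k ltac:(lia) ltac:(lia)).
  rewrite (lim_from_cell u _ (xk n (k-1)) (xk n k) (xk n (k-1)) Hlt ltac:(lra) ltac:(lra) (or_introl eq_refl)
    (fun x Hx => proj1 (cell_rep n sigma lam u k ltac:(lia) He Hk x Hx))
    (sol_cont _ _ _ _ _) (Hc _ B1)).
  rewrite Rminus_diag, Cf0, Sf0. ring.
Qed.

Lemma N2 k : (1 <= k <= n)%nat -> u (xk n k) = al n lam u k * c + be n lam u k * s.
Proof.
  intros Hk. destruct He as [Hc _].
  pose proof (cell_lt k ltac:(lia)) as Hlt.
  assert (B1 := xk_bounds n (k-1) ltac:(lia) ltac:(lia)).
  assert (B2 := xk_bounds n k ltac:(lia) ltac:(lia)).
  rewrite (lim_from_cell u _ (xk n (k-1)) (xk n k) (xk n k) Hlt ltac:(lra) ltac:(lra) (or_intror eq_refl)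
    (fun x Hx => proj1 (cell_rep n sigma lam u k ltac:(lia) He Hk x Hx))
    (sol_cont _ _ _ _ _) (Hc _ B2)).
  rewrite xk_step by lia. reflexivity.
Qed.

Lemma N3 k : (1 <= k <= n - 1)%nat ->
  be n lam u (S k) - (-lam * al n lam u k * s + be n lam u k * c) = sigma * u (xk n k).
Proof.
  intros Hk. destruct He as [_ [_ [_ [_ [_ Hj]]]]].
  destruct (Hj k Hk) as [dp [dm [Hp [Hm Hd]]]].
  rewrite <- Hd. f_equal.
  - pose proof (cell_lt (S k) ltac:(lia)) as Hlt.
    replace (S k - 1)%nat with k in Hlt by lia.
    assert (L := lim_right_cell (Derive u) _ (xk n k) (xk n (S k)) Hlt
      (fun y Hy => proj2 (cell_rep n sigma lam u (S k) ltac:(lia) He ltac:(lia) y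
         ltac:(unfold in_open_cell; replace (S k - 1)%nat with k by lia; exact Hy)))
      (sol_cont1 _ _ _ _ _)).
    replace (S k - 1)%nat with k in L by lia.
    rewrite Rminus_diag, Cf0, Sf0 in L.
    assert (PF : ProperFilter' (at_right (xk n k))) by (apply Proper_StrongProper, at_right_proper_filter).
    pose proof (@filterlim_locally_unique R R_AbsRing R_NormedModule _ PF (Derive u) _ _ Hp L) as E.
    rewrite E. ring.
  - pose proof (cell_lt k ltac:(lia)) as Hlt.
    assert (L := lim_left_cell (Derive u) _ (xk n (k-1)) (xk n k) Hlt
      (fun y Hy => proj2 (cell_rep n sigma lam u k ltac:(lia) He ltac:(lia) y Hy))
      (sol_cont1 _ _ _ _ _)).
    cbv beta in L. rewrite xk_step in L by lia.
    assert (PF : ProperFilter' (at_left (xk n k))) by (apply Proper_StrongProper, at_left_proper_filter).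
    symmetry; exact (@filterlim_locally_unique R R_AbsRing R_NormedModule _ PF (Derive u) _ _ Hm L).
Qed.

End Node.

Lemma xk_mono n i j : (1 <= n)%nat -> (i <= j)%nat -> xk n i <= xk n j.
Proof.
  intros. unfold xk, Rdiv. apply Rmult_le_compat_r.
  left; apply Rinv_0_lt_compat, lt_0_INR; lia. apply le_INR; auto.
Qed.

Lemma cover n x : (1 <= n)%nat -> 0 <= x <= 1 ->
  (exists k, (k <= n)%nat /\ x = xk n k) \/ (exists k, (1 <= k <= n)%nat /\ in_open_cell n k x).
Proof.
  intros Hn Hx.
  assert (G : forall K, (K <= n)%nat -> forall x, 0 <= x <= xk n K ->
    (exists k, (k <= n)%nat /\ x = xk n k) \/ (exists k, (1 <= k <= n)%nat /\ in_open_cell n k x)).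
  { induction K as [|K IH]; intros HK y Hy.
    - left. exists 0%nat. rewrite xk_0 in Hy. split; [lia | rewrite xk_0; lra].
    - destruct (Rle_lt_dec y (xk n K)) as [H1|H1].
      + apply IH; [lia | lra].
      + destruct (Req_dec y (xk n (S K))) as [H2|H2].
        * left. exists (S K). split; auto.
        * right. exists (S K). split; [lia|]. unfold in_open_cell.
          replace (S K - 1)%nat with K by lia. lra. }
  apply (G n); [lia| rewrite xk_n by lia; lra].
Qed.

Lemma node_lemma n sigma lam u : (2 <= n)%nat -> is_eigenfunction n sigma lam u ->
  u (xk n 0) = 0 /\ u (xk n n) = 0 /\
  (forall k, (1 <= k <= n - 1)%nat ->
     u (xk n (S k)) + u (xk n (k - 1)) =
       (2 * Cf lam (/ INR n) + sigma * Sf lam (/ INR n)) * u (xk n k)) /\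
  exists beta, beta <> 0 /\ u (xk n 1) = beta * Sf lam (/ INR n).
Proof.
  intros Hn He.
  assert (Hu0 : u (xk n 0) = 0) by (rewrite xk_0; apply He).
  assert (Hun : u (xk n n) = 0) by (rewrite xk_n by lia; apply He).
  set (c := Cf lam (/ INR n)). set (s := Sf lam (/ INR n)).
  pose proof (CS_id lam (/ INR n)) as Hid. fold c s in Hid.
  split; [auto|]. split; [auto|]. split.
  - intros k Hk.
    pose proof (N1 n sigma lam u Hn He k ltac:(lia)) as A1.
    pose proof (N2 n sigma lam u Hn He k ltac:(lia)) as A2.
    pose proof (N1 n sigma lam u Hn He (S k) ltac:(lia)) as A3.
    replace (S k - 1)%nat with k in A3 by lia.
    pose proof (N2 n sigma lam u Hn He (S k) ltac:(lia)) as A4.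
    pose proof (N3 n sigma lam u Hn He k Hk) as A5.
    fold c s in A2, A4, A5.
    set (v0 := u (xk n (k - 1))) in *. set (v1 := u (xk n k)) in *. set (v2 := u (xk n (S k))) in *.
    set (a1 := al n lam u k) in *. set (b1 := be n lam u k) in *.
    set (a2 := al n lam u (S k)) in *. set (b2 := be n lam u (S k)) in *.
    assert (Eb2 : b2 = sigma * v1 + (-lam * a1 * s + b1 * c)) by lra.
    rewrite A4, Eb2, <- A3, A2, <- A1.
    transitivity (v0 * (1 - (c ^ 2 + lam * s ^ 2)) +
       (2 * c + sigma * s) * (v0 * c + b1 * s)); [ring|]. rewrite Hid. ring.
  - exists (be n lam u 1). split.
    + intro Hb.
      assert (Z : forall k, (1 <= k <= n)%nat -> al n lam u k = 0 /\ be n lam u k = 0).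
      { induction k as [|k IH]; intros Hk; [lia|].
        destruct (Nat.eq_dec k 0) as [->|Hk0].
        - split; auto. rewrite <- (N1 n sigma lam u Hn He 1 ltac:(lia)). simpl. auto.
        - destruct (IH ltac:(lia)) as [Ia Ib].
          pose proof (N2 n sigma lam u Hn He k ltac:(lia)) as A2.
          pose proof (N1 n sigma lam u Hn He (S k) ltac:(lia)) as A3.
          replace (S k - 1)%nat with k in A3 by lia.
          pose proof (N3 n sigma lam u Hn He k ltac:(lia)) as A5.
          rewrite Ia, Ib in A2, A5.
          assert (u (xk n k) = 0) by lra. split; [lra|]. rewrite H in A5. lra. }
      pose proof He as He2. destruct He2 as [_ [[x [Hx Hux]] [Hode _]]].
      apply Hux.
      destruct (cover n x ltac:(lia) Hx) as [[k [Hk ->]]|[k [Hk Hc]]].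
      * destruct (Nat.eq_dec k n) as [->|Hkn]; [exact Hun|].
        pose proof (N1 n sigma lam u Hn He (S k) ltac:(lia)) as A3.
        replace (S k - 1)%nat with k in A3 by lia. rewrite A3. apply Z; lia.
      * destruct (Z k Hk) as [Za Zb].
        rewrite (proj1 (cell_rep n sigma lam u k ltac:(lia) He Hk x Hc)), Za, Zb. ring.
    + pose proof (N2 n sigma lam u Hn He 1 ltac:(lia)) as A2.
      pose proof (N1 n sigma lam u Hn He 1 ltac:(lia)) as A1. simpl in A1.
      rewrite Hu0 in A1. rewrite A2, <- A1. fold s. ring.
Qed.

Fixpoint P (T : R) (k : nat) : R :=
  match k with
  | O => 0
  | S O => 1
  | S ((S j) as k') => 2 * T * P T k' - P T j
  end.

Lemma P_rec T k : P T (S (S k)) = 2 * T * P T (S k) - P T k.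
Proof. reflexivity. Qed.

Lemma node_P (v : nat -> R) T n : v 0%nat = 0 ->
  (forall k, (1 <= k <= n - 1)%nat -> v (S k) + v (k - 1)%nat = 2 * T * v k) ->
  forall k, (k <= n)%nat -> v k = v 1%nat * P T k.
Proof.
  intros H0 Hr.
  assert (G : forall k, (S k <= n)%nat -> v k = v 1%nat * P T k /\ v (S k) = v 1%nat * P T (S k)).
  { induction k as [|k IH]; intros Hk.
    - simpl. rewrite H0. split; ring.
    - destruct (IH ltac:(lia)) as [I1 I2]. split; auto.
      rewrite P_rec. pose proof (Hr (S k) ltac:(lia)) as R. replace (S k - 1)%nat with k in R by lia.
      assert (v (S (S k)) = 2 * T * v (S k) - v k) by lra. rewrite H, I1, I2. ring. }
  intros k Hk. destruct k as [|k].
  - simpl. rewrite H0. ring.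
  - apply (G k); auto.
Qed.

Lemma P_ge1 T : 1 <= T -> forall k, 1 <= P T (S k).
Proof.
  intros HT.
  assert (G : forall k, P T (S k) - P T k >= 1 /\ P T k >= 0).
  { induction k as [|k [I1 I2]].
    - simpl. lra.
    - rewrite P_rec. split; nra. }
  intros k. destruct (G k). lra.
Qed.

Lemma P_neg T k : P (- T) k = (-1) ^ (S k) * P T k.
Proof.
  revert k.
  assert (G : forall k, P (- T) k = (-1) ^ (S k) * P T k /\ P (- T) (S k) = (-1) ^ (S (S k)) * P T (S k)).
  { induction k as [|k [I1 I2]].
    - simpl. split; ring.
    - split; auto. rewrite !P_rec, I1, I2. simpl. ring. }
  intro k; apply (G k).
Qed.

Lemma P_cos th k : P (cos th) k * sin th = sin (INR k * th).
Proof.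
  revert k.
  assert (G : forall k, P (cos th) k * sin th = sin (INR k * th) /\
                        P (cos th) (S k) * sin th = sin (INR (S k) * th)).
  { induction k as [|k [I1 I2]].
    - simpl. rewrite !Rmult_0_l, !Rmult_1_l, sin_0. split; ring.
    - split; auto. rewrite P_rec.
      transitivity (2 * cos th * (P (cos th) (S k) * sin th) - P (cos th) k * sin th); [ring|].
      rewrite I1, I2.
      replace (INR (S (S k)) * th) with (INR (S k) * th + th) by (rewrite !S_INR; ring).
      replace (INR k * th) with (INR (S k) * th - th) by (rewrite !S_INR; ring).
      rewrite sin_plus, sin_minus. ring. }
  intro k; apply (G k).
Qed.

Lemma P_root T n : (1 <= n)%nat -> P T n = 0 ->
  exists i, (1 <= i <= n - 1)%nat /\ T = cos (INR i * PI / INR n).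
Proof.
  intros Hn HP.
  destruct n as [|n']; [lia|].
  destruct (Rle_dec 1 T) as [H1|H1].
  { pose proof (P_ge1 T H1 n'). lra. }
  destruct (Rle_dec T (-1)) as [H2|H2].
  { pose proof (P_ge1 (- T) ltac:(lra) n'). rewrite P_neg, HP in H. lra. }
  set (n := S n') in *.
  set (th := acos T).
  assert (Hc : cos th = T) by (apply cos_acos; lra).
  pose proof (acos_bound T) as Hb. fold th in Hb.
  assert (Hth0 : th <> 0) by (intro E; rewrite E, cos_0 in Hc; lra).
  assert (Hthp : th <> PI) by (intro E; rewrite E, cos_PI in Hc; lra).
  assert (Hs : 0 < sin th) by (apply sin_gt_0; lra).
  pose proof (P_cos th n) as Pc. rewrite Hc, HP, Rmult_0_l in Pc.
  destruct (sin_eq_0_0 _ (eq_sym Pc)) as [z Hz].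
  assert (Hn0 : 0 < INR n) by (apply lt_0_INR; unfold n; lia).
  assert (Z1 : 0 < IZR z * PI) by (rewrite <- Hz; apply Rmult_lt_0_compat; lra).
  assert (Z2 : IZR z * PI < INR n * PI) by (rewrite <- Hz; apply Rmult_lt_compat_l; lra).
  pose proof PI_RGT_0.
  assert (Z3 : 0 < IZR z) by nra.
  assert (Z4 : IZR z < INR n) by nra.
  apply lt_0_IZR in Z3. rewrite INR_IZR_INZ in Z4. apply lt_IZR in Z4.
  exists (Z.to_nat z). split; [lia|].
  rewrite INR_IZR_INZ, Z2Nat.id by lia. rewrite <- Hz, <- Hc. f_equal. field. lra.
Qed.

Definition Tf n sigma g := cos (g / INR n) + sigma * sin (g / INR n) / (2 * g).

Lemma classify n sigma mu : (2 <= n)%nat -> 0 <= sigma -> is_eigenvalue n sigma mu ->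
  0 < mu /\ (INR n * PI <= sqrt mu \/
    exists i, (1 <= i <= n - 1)%nat /\ Tf n sigma (sqrt mu) = cos (INR i * PI / INR n)).
Proof.
  intros Hn Hsig [w Hw].
  destruct (node_lemma n sigma mu w Hn Hw) as [V0 [Vn [Vr [b [Hb V1]]]]].
  set (c := Cf mu (/ INR n)) in *. set (s := Sf mu (/ INR n)) in *.
  set (T := c + sigma * s / 2).
  assert (HP : forall k, (k <= n)%nat -> w (xk n k) = w (xk n 1) * P T k).
  { apply (node_P (fun k => w (xk n k)) T n V0).
    intros k Hk. cbv beta. rewrite (Vr k Hk). unfold T. field. }
  assert (Hn0 : 0 < INR n) by (apply lt_0_INR; lia).
  assert (Hh : 0 < / INR n) by (apply Rinv_0_lt_compat; lra).
  assert (PN : w (xk n 1) * P T n = 0) by (rewrite <- HP; auto).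
  destruct (Rle_dec mu 0) as [Hmu|Hmu].
  { exfalso. destruct (CS_nonpos mu (/ INR n) Hmu Hh) as [C1 S1]. fold c s in C1, S1.
    assert (1 <= T) by (unfold T; nra).
    destruct n as [|n']; [lia|]. pose proof (P_ge1 T H n').
    rewrite V1 in PN. assert (b * s <> 0) by (apply Rmult_integral_contrapositive; split; lra).
    apply H1. apply (Rmult_eq_reg_r (P T (S n'))); lra. }
  split; [lra|].
  set (g := sqrt mu).
  assert (Hg : 0 < g) by (apply sqrt_lt_R0; lra).
  destruct (Rle_dec (INR n * PI) g) as [Hbig|Hsmall]; [left; auto|right].
  assert (Hgn : 0 < g / INR n < PI).
  { split. apply Rdiv_lt_0_compat; lra.
    apply (Rmult_lt_reg_r (INR n)); auto. unfold Rdiv. rewrite Rmult_assoc, Rinv_l by lra. lra. }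
  assert (Es : s = sin (g / INR n) / g).
  { unfold s, Sf. destruct (Rlt_dec 0 mu); [|lra]. reflexivity. }
  assert (Ec : c = cos (g / INR n)).
  { unfold c, Cf. destruct (Rlt_dec 0 mu); [|lra]. reflexivity. }
  assert (Hs : 0 < s) by (rewrite Es; apply Rdiv_lt_0_compat; auto; apply sin_gt_0; lra).
  assert (PT : P T n = 0).
  { rewrite V1 in PN. assert (b * s <> 0) by (apply Rmult_integral_contrapositive; split; lra).
    apply (Rmult_eq_reg_l (b * s)); lra. }
  destruct (P_root T n ltac:(lia) PT) as [i [Hi Ti]].
  exists i. split; auto. rewrite <- Ti. unfold T, Tf. fold g. rewrite Ec, Es. field. lra.
Qed.

Lemma tcos_lt_sin t : 0 < t < PI -> t * cos t < sin t.
Proof.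
  intros Ht.
  assert (HD : forall y, 0 <= y <= t -> derivable_pt_lim (fun y => sin y - y * cos y) y (y * sin y)).
  { intros y Hy. apply is_derive_Reals. auto_derive; auto. ring. }
  destruct (MVT_cor2 _ _ 0 t ltac:(lra) HD) as [z [Hz1 Hz2]].
  rewrite sin_0, cos_0 in Hz1.
  assert (0 < sin z) by (apply sin_gt_0; lra).
  assert (0 < z * sin z * (t - 0)) by (apply Rmult_lt_0_compat; [apply Rmult_lt_0_compat|]; lra).
  lra.
Qed.

Definition Fa (a t : R) := cos t + a * sin t / t.

Lemma Fa_decr a t1 t2 : 0 <= a -> 0 < t1 -> t1 < t2 -> t2 <= PI -> Fa a t2 < Fa a t1.
Proof.
  intros Ha H1 H12 H2.
  assert (HD : forall y, t1 <= y <= t2 -> derivable_pt_lim (Fa a) y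
     (- sin y + a * ((y * cos y - sin y) / (y * y)))).
  { intros y Hy. apply is_derive_Reals. unfold Fa. auto_derive.
    - lra.
    - field. lra. }
  destruct (MVT_cor2 _ _ t1 t2 H12 HD) as [z [Hz1 Hz2]].
  assert (S1 : 0 < sin z) by (apply sin_gt_0; lra).
  assert (S2 : z * cos z < sin z) by (apply tcos_lt_sin; lra).
  assert (S3 : (z * cos z - sin z) / (z * z) < 0).
  { apply Rdiv_neg_pos; [lra | apply Rmult_lt_0_compat; lra]. }
  assert (- sin z + a * ((z * cos z - sin z) / (z * z)) < 0) by nra.
  assert ((- sin z + a * ((z * cos z - sin z) / (z * z))) * (t2 - t1) < 0)
    by (apply Rmult_neg_pos; lra).
  lra.
Qed.

Lemma Tf_Fa n sigma g : (1 <= n)%nat -> 0 < g -> Tf n sigma g = Fa (sigma / (2 * INR n)) (g / INR n).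
Proof.
  intros Hn Hg. assert (0 < INR n) by (apply lt_0_INR; lia).
  unfold Tf, Fa. field. split; lra.
Qed.

Lemma Tf_decr n sigma g1 g2 : (1 <= n)%nat -> 0 <= sigma -> 0 < g1 -> g1 < g2 -> g2 <= INR n * PI ->
  Tf n sigma g2 < Tf n sigma g1.
Proof.
  intros Hn Hs H1 H12 H2. assert (Hn0 : 0 < INR n) by (apply lt_0_INR; lia).
  rewrite !Tf_Fa by (auto; lra).
  apply Fa_decr.
  - apply Rdiv_le_0_compat; lra.
  - apply Rdiv_lt_0_compat; lra.
  - unfold Rdiv; apply Rmult_lt_compat_r; [apply Rinv_0_lt_compat|]; lra.
  - apply (Rmult_le_reg_r (INR n)); auto. unfold Rdiv. rewrite Rmult_assoc, Rinv_l by lra. lra.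
Qed.

Lemma Tf_inj n sigma g1 g2 : (1 <= n)%nat -> 0 <= sigma -> 0 < g1 -> 0 < g2 ->
  g1 <= INR n * PI -> g2 <= INR n * PI -> Tf n sigma g1 = Tf n sigma g2 -> g1 = g2.
Proof.
  intros. destruct (Rtotal_order g1 g2) as [L|[E|L]]; auto.
  - pose proof (Tf_decr n sigma g1 g2 H H0 H1 L H4). lra.
  - pose proof (Tf_decr n sigma g2 g1 H H0 H2 L H3). lra.
Qed.

Lemma cos_i_decr n i j : (1 <= n)%nat -> (i < j)%nat -> (j <= n)%nat ->
  cos (INR j * PI / INR n) < cos (INR i * PI / INR n).
Proof.
  intros Hn Hij Hj. assert (Hn0 : 0 < INR n) by (apply lt_0_INR; lia).
  pose proof PI_RGT_0.
  assert (I1 : INR i < INR j) by (apply lt_INR; auto).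
  assert (I2 : INR j <= INR n) by (apply le_INR; auto).
  pose proof (pos_INR i).
  apply cos_decreasing_1.
  - apply Rdiv_le_0_compat; nra.
  - apply (Rmult_le_reg_r (INR n)); auto. unfold Rdiv. rewrite Rmult_assoc, Rinv_l by lra. nra.
  - apply Rdiv_le_0_compat; nra.
  - apply (Rmult_le_reg_r (INR n)); auto. unfold Rdiv. rewrite Rmult_assoc, Rinv_l by lra. nra.
  - unfold Rdiv. apply Rmult_lt_compat_r; [apply Rinv_0_lt_compat; lra|]. nra.
Qed.

Lemma Tf_cont n sigma g : (1 <= n)%nat -> 0 < g -> continuity_pt (Tf n sigma) g.
Proof.
  intros Hn Hg. assert (Hn0 : 0 < INR n) by (apply lt_0_INR; lia).
  apply continuity_pt_filterlim.
  apply (@ex_derive_continuous R_AbsRing R_NormedModule).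
  unfold Tf. auto_derive. lra.
Qed.

Lemma exists_root n sigma i : (2 <= n)%nat -> 0 <= sigma -> (1 <= i <= n - 1)%nat ->
  exists g, 0 < g < INR n * PI /\ Tf n sigma g = cos (INR i * PI / INR n).
Proof.
  intros Hn Hs Hi. assert (Hn0 : 0 < INR n) by (apply lt_0_INR; lia).
  assert (Hn2 : 2 <= INR n) by (replace 2 with (INR 2) by (simpl; ring); apply le_INR; auto).
  pose proof PI_RGT_0.
  set (ci := cos (INR i * PI / INR n)).
  set (f := fun g => ci - Tf n sigma g).
  assert (Ii : 1 <= INR i) by (replace 1 with (INR 1) by reflexivity; apply le_INR; lia).
  assert (Ii2 : INR i <= INR n - 1) by (rewrite <- INR_pred by lia; apply le_INR; lia).
  assert (Hpos : PI / 2 < INR n * PI) by nra.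
  assert (F1 : f (PI / 2) < 0).
  { unfold f, Tf, ci.
    assert (A1 : 0 < PI / 2 / INR n < PI) by (split; [apply Rdiv_lt_0_compat; lra|];
      apply (Rmult_lt_reg_r (INR n)); auto; unfold Rdiv; rewrite Rmult_assoc, Rinv_l by lra; nra).
    assert (A2 : 0 <= sigma * sin (PI / 2 / INR n) / (2 * (PI / 2))).
    { apply Rdiv_le_0_compat; [apply Rmult_le_pos; [lra| left; apply sin_gt_0; lra] | lra]. }
    assert (A3 : cos (INR i * PI / INR n) < cos (PI / 2 / INR n)).
    { apply cos_decreasing_1.
      - left; apply A1.
      - left; apply A1.
      - apply Rdiv_le_0_compat; nra.
      - apply (Rmult_le_reg_r (INR n)); auto. unfold Rdiv. rewrite Rmult_assoc, Rinv_l by lra. nra.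
      - unfold Rdiv. apply Rmult_lt_compat_r; [apply Rinv_0_lt_compat; lra|]. nra. }
    lra. }
  assert (F2 : 0 < f (INR n * PI)).
  { unfold f, Tf, ci.
    replace (INR n * PI / INR n) with PI by (field; lra). rewrite cos_PI, sin_PI.
    assert (A3 : cos PI < cos (INR i * PI / INR n)).
    { apply cos_decreasing_1; try lra.
      - apply Rdiv_le_0_compat; nra.
      - apply (Rmult_le_reg_r (INR n)); auto. unfold Rdiv. rewrite Rmult_assoc, Rinv_l by lra. nra.
      - apply (Rmult_lt_reg_r (INR n)); auto. unfold Rdiv. rewrite Rmult_assoc, Rinv_l by lra. nra. }
    rewrite cos_PI in A3. unfold Rdiv at 2. rewrite Rmult_0_r, Rmult_0_l. lra. }
  assert (Hc : forall a, PI / 2 <= a <= INR n * PI -> continuity_pt f a).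
  { intros a Ha. unfold f. apply continuity_pt_minus. apply continuity_pt_const. intros x y; auto.
    apply Tf_cont; lia || lra. }
  destruct (Ranalysis5.IVT_interv f (PI / 2) (INR n * PI) Hc Hpos F1 F2) as [z [Hz1 Hz2]].
  exists z. split.
  - split; [lra|]. destruct (Req_dec z (INR n * PI)) as [E|E]; [subst z; lra | lra].
  - unfold f in Hz2. lra.
Qed.

Definition trig (A B g x : R) := A * sin (g * x) + B * cos (g * x).

Lemma trig_D A B g x : is_derive (trig A B g) x (trig (- B * g) (A * g) g x).
Proof. unfold trig. auto_derive; auto. ring. Qed.

Lemma trig_Derive A B g x : Derive (trig A B g) x = trig (- B * g) (A * g) g x.
Proof. apply is_derive_unique, trig_D. Qed.

Lemma trig_smooth A B g : forall p, exists A' B', forall x,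
  Derive_n (trig A B g) p x = trig A' B' g x /\ ex_derive_n (trig A B g) p x.
Proof.
  induction p as [|p [A' [B' IH]]].
  - exists A, B. intros x. simpl. split; auto.
  - exists (- B' * g), (A' * g). intros x. simpl. split.
    + rewrite (Derive_ext _ (trig A' B' g)) by (intro t; apply IH). apply trig_Derive.
    + apply (ex_derive_ext (trig A' B' g)). intro t; symmetry; apply IH.
      eexists. apply trig_D.
Qed.

Lemma trig_D2 A B g x : Derive_n (trig A B g) 2 x = - g ^ 2 * trig A B g x.
Proof.
  simpl. rewrite (Derive_ext _ (trig (- B * g) (A * g) g)) by (intro t; apply trig_Derive).
  rewrite trig_Derive. unfold trig. ring.
Qed.

Section Constr.
Variables (n : nat) (sigma g th : R).
Hypothesis Hn : (2 <= n)%nat.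
Hypothesis Hsig : 0 <= sigma.
Hypothesis Hg : 0 < g < INR n * PI.
Hypothesis Hth : 0 < th < PI.
Hypothesis HthI : exists i : nat, th = INR i * PI / INR n.
Hypothesis HT : Tf n sigma g = cos th.

Let Hn0 : 0 < INR n.
Proof. apply lt_0_INR; lia. Qed.

Definition s0 := sin (g / INR n).
Definition V (j : Z) := sin (IZR j * th).
Definition X (j : Z) := IZR j / INR n.
Definition W (j : Z) (x : R) := (V j * sin (g * (X (j + 1) - x)) + V (j + 1) * sin (g * (x - X j))) / s0.
Definition W1 (j : Z) (x : R) := g * (- V j * cos (g * (X (j + 1) - x)) + V (j + 1) * cos (g * (x - X j))) / s0.
Definition w (x : R) := W (Int_part (INR n * x)) x.

Lemma s0_pos : 0 < s0.
Proof.
  unfold s0. apply sin_gt_0. apply Rdiv_lt_0_compat; lra.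
  apply (Rmult_lt_reg_r (INR n)); auto. unfold Rdiv. rewrite Rmult_assoc, Rinv_l by lra. lra.
Qed.

Lemma X_succ j : X (j + 1) = X j + / INR n.
Proof. unfold X. rewrite plus_IZR. field. lra. Qed.

Lemma floor_X j x : X j <= x < X (j + 1) -> Int_part (INR n * x) = j.
Proof.
  intros [H1 H2]. rewrite X_succ in H2. unfold X in H1, H2.
  symmetry. apply Int_part_spec. split.
  - apply (Rmult_lt_compat_l (INR n)) in H2; auto.
    replace (INR n * (IZR j / INR n + / INR n)) with (IZR j + 1) in H2 by (field; lra). lra.
  - apply (Rmult_le_compat_l (INR n)) in H1; [|lra].
    replace (INR n * (IZR j / INR n)) with (IZR j) in H1 by (field; lra). lra.
Qed.

Lemma w_W j x : X j <= x < X (j + 1) -> w x = W j x.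
Proof. intros H. unfold w. rewrite (floor_X j x H). reflexivity. Qed.

Lemma W_left j : W j (X j) = V j.
Proof.
  unfold W. rewrite X_succ. replace (g * (X j + / INR n - X j)) with (g / INR n) by (field; lra).
  rewrite Rminus_diag, Rmult_0_r, sin_0. fold s0. pose proof s0_pos. field. lra.
Qed.

Lemma W_right j : W j (X (j + 1)) = V (j + 1).
Proof.
  unfold W. rewrite X_succ. replace (g * (X j + / INR n - X j)) with (g / INR n) by (field; lra).
  rewrite Rminus_diag, Rmult_0_r, sin_0. fold s0. pose proof s0_pos. field. lra.
Qed.

Lemma W_trig j : forall x, W j x =
  trig ((- V j * cos (g * X (j + 1)) + V (j + 1) * cos (g * X j)) / s0)
       ((V j * sin (g * X (j + 1)) - V (j + 1) * sin (g * X j)) / s0) g x.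
Proof.
  intros x. unfold W, trig. pose proof s0_pos.
  replace (g * (X (j + 1) - x)) with (g * X (j + 1) - g * x) by ring.
  replace (g * (x - X j)) with (g * x - g * X j) by ring.
  rewrite !sin_minus. field. lra.
Qed.

Lemma W_D j x : is_derive (W j) x (W1 j x).
Proof.
  unfold W, W1. pose proof s0_pos. auto_derive; auto. unfold Rminus. field. lra.
Qed.

Lemma W_cont j x : continuous (W j) x.
Proof. apply (@ex_derive_continuous R_AbsRing R_NormedModule). eexists. apply W_D. Qed.

Lemma W1_cont j x : continuous (W1 j) x.
Proof.
  apply (@ex_derive_continuous R_AbsRing R_NormedModule). unfold W1. pose proof s0_pos.
  auto_derive. lra.
Qed.

Lemma w_loc j x : X j < x < X (j + 1) -> locally x (fun t => W j t = w t).
Proof.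
  intros Hx. apply (locally_open (fun y => X j < y < X (j + 1))).
  - apply open_and; [apply open_gt | apply open_lt].
  - intros y Hy. symmetry. apply w_W. lra.
  - exact Hx.
Qed.

Lemma w_cont x : continuous w x.
Proof.
  set (j := Int_part (INR n * x)).
  destruct (base_Int_part (INR n * x)) as [B1 B2]. fold j in B1, B2.
  assert (Hx1 : X j <= x).
  { unfold X. apply (Rmult_le_reg_l (INR n)); auto. replace (INR n * (IZR j / INR n)) with (IZR j) by (field; lra). lra. }
  assert (Hx2 : x < X (j + 1)).
  { rewrite X_succ. unfold X. apply (Rmult_lt_reg_l (INR n)); auto.
    replace (INR n * (IZR j / INR n + / INR n)) with (IZR j + 1) by (field; lra). lra. }
  destruct Hx1 as [Hlt|Heq].
  - apply (continuous_ext_loc w (W j) x); [apply w_loc; lra | apply W_cont].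
  - clearbody j. subst x. apply filterlim_locally. intros eps.
    assert (Wx : w (X j) = V j) by (rewrite (w_W j); [apply W_left | lra]).
    assert (Hjm : (j - 1 + 1 = j)%Z) by ring.
    pose proof (proj1 (filterlim_locally (W j) (W j (X j))) (W_cont j (X j)) eps) as L1.
    pose proof (proj1 (filterlim_locally (W (j - 1)) (W (j - 1) (X j))) (W_cont (j - 1) (X j)) eps) as L2.
    assert (L3 : locally (X j) (fun y => X (j - 1) <= y < X (j + 1))).
    { apply (locally_open (fun y => X (j - 1) < y < X (j + 1))).
      - apply open_and; [apply open_gt | apply open_lt].
      - intros y Hy. lra.
      - pose proof (X_succ (j - 1)). rewrite Hjm in H.
        assert (0 < / INR n) by (apply Rinv_0_lt_compat; lra). lra. }
    eapply filter_imp; [| exact (filter_and _ _ L1 (filter_and _ _ L2 L3))].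
    intros y Hy; simpl in Hy.
    destruct Hy as [H1 [H2 [H3 H4]]]. rewrite Wx.
    destruct (Rle_lt_dec (X j) y) as [Hy|Hy].
    + rewrite (w_W j y) by lra. rewrite W_left in H1. exact H1.
    + rewrite (w_W (j - 1) y) by (rewrite Hjm; lra).
      pose proof (W_right (j - 1)) as E. rewrite Hjm in E. rewrite E in H2. exact H2.
Qed.

Lemma Vn_zero : V (Z.of_nat n) = 0.
Proof.
  destruct HthI as [i Hi]. unfold V. apply sin_eq_0_1. exists (Z.of_nat i).
  rewrite Hi, <- !INR_IZR_INZ. field. lra.
Qed.

Lemma xk_X k : xk n k = X (Z.of_nat k).
Proof. unfold xk, X. rewrite <- INR_IZR_INZ. reflexivity. Qed.

Lemma W1_jump k : W1 (Z.of_nat k) (X (Z.of_nat k)) - W1 (Z.of_nat k - 1) (X (Z.of_nat k)) =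
  sigma * V (Z.of_nat k).
Proof.
  set (j := Z.of_nat k).
  assert (Hjm : (j - 1 + 1 = j)%Z) by ring.
  unfold W1. rewrite Hjm. rewrite X_succ.
  pose proof (X_succ (j - 1)) as E. rewrite Hjm in E.
  replace (g * (X j + / INR n - X j)) with (g / INR n) by (field; lra).
  replace (g * (X j - X (j - 1))) with (g / INR n) by (rewrite E; field; lra).
  rewrite !Rminus_diag, !Rmult_0_r, cos_0.
  assert (HV : V (j + 1) + V (j - 1) = 2 * cos th * V j).
  { unfold V. rewrite plus_IZR, minus_IZR.
    replace ((IZR j + 1) * th) with (IZR j * th + th) by ring.
    replace ((IZR j - 1) * th) with (IZR j * th - th) by ring.
    rewrite sin_plus, sin_minus. ring. }
  rewrite <- HT in HV. unfold Tf in HV. fold s0 in HV |- *. pose proof s0_pos.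
  assert (HV2 : V (j + 1) + V (j - 1) - 2 * cos (g / INR n) * V j = sigma * s0 / g * V j)
    by (rewrite HV; field; lra).
  transitivity (g / s0 * (V (j + 1) + V (j - 1) - 2 * cos (g / INR n) * V j)).
  - field. lra.
  - rewrite HV2. field. lra.
Qed.

Lemma constr_eig : is_eigenfunction n sigma (g ^ 2) w.
Proof.
  split; [|split; [|split; [|split; [|split]]]].
  - intros x Hx. eapply filterlim_filter_le_1; [apply filter_le_within | apply w_cont].
  - exists (xk n 1). split. apply xk_bounds; lia.
    rewrite xk_X. rewrite (w_W 1). change (Z.of_nat 1) with 1%Z. rewrite W_left.
    unfold V. rewrite Rmult_1_l. apply Rgt_not_eq, sin_gt_0; lra.
    change (Z.of_nat 1) with 1%Z. pose proof (X_succ 1).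
    assert (0 < / INR n) by (apply Rinv_0_lt_compat; lra). lra.
  - intros k Hk x Hx. unfold in_open_cell in Hx. rewrite !xk_X in Hx.
    set (j := (Z.of_nat k - 1)%Z).
    assert (Ej : Z.of_nat (k - 1) = j) by (unfold j; lia).
    assert (Ej1 : (j + 1)%Z = Z.of_nat k) by (unfold j; lia).
    rewrite Ej in Hx. rewrite <- Ej1 in Hx.
    assert (L : locally x (fun t => trig ((- V j * cos (g * X (j + 1)) + V (j + 1) * cos (g * X j)) / s0)
       ((V j * sin (g * X (j + 1)) - V (j + 1) * sin (g * X j)) / s0) g t = w t)).
    { eapply filter_imp; [| exact (w_loc j x Hx)]. intros t Ht; simpl in Ht. rewrite <- Ht. symmetry. apply W_trig. }
    split.
    + intros p. apply (ex_derive_n_ext_loc _ _ p x L).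
      destruct (trig_smooth ((- V j * cos (g * X (j + 1)) + V (j + 1) * cos (g * X j)) / s0)
       ((V j * sin (g * X (j + 1)) - V (j + 1) * sin (g * X j)) / s0) g p) as [A' [B' HH]].
      apply HH.
    + rewrite <- (Derive_n_ext_loc _ _ 2 x L). rewrite trig_D2.
      apply locally_singleton in L. rewrite L. ring.
  - assert (X0 : X 0 = 0) by (unfold X; simpl; unfold Rdiv; ring).
    replace (w 0) with (w (X 0)) by (rewrite X0; auto).
    rewrite (w_W 0). rewrite W_left. unfold V. rewrite Rmult_0_l. apply sin_0.
    rewrite X_succ. assert (0 < / INR n) by (apply Rinv_0_lt_compat; lra). lra.
  - rewrite <- (xk_n n) by lia. rewrite xk_X. rewrite (w_W (Z.of_nat n)). rewrite W_left. apply Vn_zero.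
    rewrite X_succ. assert (0 < / INR n) by (apply Rinv_0_lt_compat; lra). lra.
  - intros k Hk. exists (W1 (Z.of_nat k) (X (Z.of_nat k))), (W1 (Z.of_nat k - 1) (X (Z.of_nat k))).
    set (j := Z.of_nat k).
    assert (Hjm : (j - 1 + 1 = j)%Z) by ring.
    assert (Hh : 0 < / INR n) by (apply Rinv_0_lt_compat; lra).
    rewrite xk_X. fold j. split; [|split].
    + apply (lim_right_cell (Derive w) (W1 j) (X j) (X (j + 1))).
      * rewrite X_succ; lra.
      * intros y Hy. rewrite <- (Derive_ext_loc _ _ y (w_loc j y Hy)). apply is_derive_unique, W_D.
      * apply W1_cont.
    + apply (lim_left_cell (Derive w) (W1 (j - 1)) (X (j - 1)) (X j)).
      * pose proof (X_succ (j - 1)). rewrite Hjm in H. lra.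
      * intros y Hy0. assert (Hy : X (j - 1) < y < X (j - 1 + 1)) by (rewrite Hjm; exact Hy0).
        rewrite <- (Derive_ext_loc _ _ y (w_loc (j - 1) y Hy)). apply is_derive_unique, W_D.
      * apply W1_cont.
    + pose proof (W1_jump k) as WJ. fold j in WJ. rewrite WJ. f_equal. rewrite (w_W j). symmetry; apply W_left.
      rewrite X_succ; lra.
Qed.

End Constr.

Lemma NoDup_map_incr (f : nat -> R) a len :
  (forall i j, (a <= i)%nat -> (i < j)%nat -> (j < a + len)%nat -> f i < f j) ->
  NoDup (map f (seq a len)).
Proof.
  revert a. induction len as [|len IH]; intros a Hf.
  - constructor.
  - simpl. constructor.
    + intro Hin. apply in_map_iff in Hin. destruct Hin as [j [Ej Hj]].
      apply in_seq in Hj. pose proof (Hf a j ltac:(lia) ltac:(lia) ltac:(lia)). lra.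
    + apply IH. intros i j H1 H2 H3. apply Hf; lia.
Qed.

Definition gi n sigma i := epsilon (inhabits 0)
  (fun g => 0 < g < INR n * PI /\ Tf n sigma g = cos (INR i * PI / INR n)).

Section Main.
Variables (n : nat) (sigma : R).
Hypothesis Hn : (2 <= n)%nat.
Hypothesis Hsig : 0 <= sigma.

Lemma gi_spec i : (1 <= i <= n - 1)%nat ->
  0 < gi n sigma i < INR n * PI /\ Tf n sigma (gi n sigma i) = cos (INR i * PI / INR n).
Proof.
  intros Hi. unfold gi. apply epsilon_spec. apply exists_root; auto.
Qed.

Lemma th_bounds i : (1 <= i <= n - 1)%nat -> 0 < INR i * PI / INR n < PI.
Proof.
  intros Hi. assert (Hn0 : 0 < INR n) by (apply lt_0_INR; lia). pose proof PI_RGT_0.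
  assert (1 <= INR i) by (replace 1 with (INR 1) by reflexivity; apply le_INR; lia).
  assert (INR i < INR n) by (apply lt_INR; lia).
  split. apply Rdiv_lt_0_compat; nra.
  apply (Rmult_lt_reg_r (INR n)); auto. unfold Rdiv. rewrite Rmult_assoc, Rinv_l by lra. nra.
Qed.

Lemma gi_eig i : (1 <= i <= n - 1)%nat -> is_eigenvalue n sigma (gi n sigma i ^ 2).
Proof.
  intros Hi. destruct (gi_spec i Hi) as [H1 H2].
  eexists. apply (constr_eig n sigma _ (INR i * PI / INR n) Hn H1 (th_bounds i Hi)).
  exists i; reflexivity. exact H2.
Qed.

Lemma Tf_order g1 g2 : 0 < g1 < INR n * PI -> 0 < g2 < INR n * PI ->
  Tf n sigma g2 < Tf n sigma g1 -> g1 < g2.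
Proof.
  intros H1 H2 HT. destruct (Rlt_le_dec g1 g2) as [L|L]; auto.
  destruct L as [L|L].
  - pose proof (Tf_decr n sigma g2 g1 ltac:(lia) Hsig ltac:(lra) L ltac:(lra)). lra.
  - subst. lra.
Qed.

Lemma gi_incr i j : (1 <= i)%nat -> (i < j)%nat -> (j <= n - 1)%nat -> gi n sigma i < gi n sigma j.
Proof.
  intros. destruct (gi_spec i ltac:(lia)) as [A1 A2]. destruct (gi_spec j ltac:(lia)) as [B1 B2].
  apply Tf_order; auto. rewrite A2, B2. apply cos_i_decr; lia.
Qed.

Lemma gi_sq_incr i j : (1 <= i)%nat -> (i < j)%nat -> (j <= n - 1)%nat -> gi n sigma i ^ 2 < gi n sigma j ^ 2.
Proof.
  intros. pose proof (gi_incr i j H H0 H1). destruct (gi_spec i ltac:(lia)) as [A1 A2]. nra.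
Qed.

Lemma NoDup_L len : (len <= n - 1)%nat -> NoDup (map (fun i => gi n sigma i ^ 2) (seq 1 len)).
Proof.
  intros. apply NoDup_map_incr. intros. apply gi_sq_incr; lia.
Qed.

End Main.

Theorem corollary1p2 (n m : nat) (sigma lam : R) (u : R -> R) :
  (2 <= n)%nat -> (1 <= m <= n - 1)%nat -> 0 <= sigma ->
  is_mth_eigenvalue n sigma m lam ->
  is_eigenfunction n sigma lam u ->
  (forall x, 0 <= x <= xk n 1 -> u x = sin (sqrt lam * x)) ->
  forall k : nat, (1 <= k <= n - 1)%nat ->
    u (xk n k) =
      sin (sqrt lam / INR n) / sin (INR m * PI / INR n) *
      sin (INR k * INR m * PI / INR n)
    /\
    u (xk n k) =
      sin (sqrt lam / INR n) / sin (INR m * PI / INR n) *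
      sin (INR m * PI * xk n k).
Proof.
  intros Hn Hm Hsig [Hev [l [Hnd [Hlen Hl]]]] Hu Hnorm k Hk.
  assert (Hn0 : 0 < INR n) by (apply lt_0_INR; lia).
  pose proof PI_RGT_0.
  destruct (classify n sigma lam Hn Hsig Hev) as [Hlam _].
  destruct (node_lemma n sigma lam u Hn Hu) as [V0 [Vn [Vr [b [Hb V1]]]]].
  set (g := sqrt lam) in *.
  assert (Hg : 0 < g) by (apply sqrt_lt_R0; lra).
  assert (Hlg : lam = g ^ 2) by (unfold g; simpl; rewrite Rmult_1_r, sqrt_sqrt; lra).
  assert (Hv1 : u (xk n 1) = sin (g / INR n)).
  { rewrite Hnorm. f_equal. unfold xk. simpl. field. lra.
    split; [apply xk_bounds; lia | lra]. }
  set (c := Cf lam (/ INR n)) in *. set (s := Sf lam (/ INR n)) in *.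
  assert (Es : s = sin (g / INR n) / g).
  { unfold s, Sf. destruct (Rlt_dec 0 lam); [|lra]. reflexivity. }
  assert (Ec : c = cos (g / INR n)).
  { unfold c, Cf. destruct (Rlt_dec 0 lam); [|lra]. reflexivity. }
  set (T := c + sigma * s / 2).
  assert (HTf : T = Tf n sigma g) by (unfold T, Tf; rewrite Ec, Es; field; lra).
  assert (HP : forall k, (k <= n)%nat -> u (xk n k) = u (xk n 1) * P T k).
  { apply (node_P (fun k => u (xk n k)) T n V0).
    intros j Hj. cbv beta. rewrite (Vr j Hj). unfold T. field. }
  rewrite HP by lia. rewrite Hv1.
  assert (Hsm : 0 < sin (INR m * PI / INR n)) by (apply sin_gt_0; apply (th_bounds n); lia).
  destruct (Req_dec (sin (g / INR n)) 0) as [Z|NZ].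
  { rewrite Z. unfold Rdiv. split; ring. }
  assert (PN : P T n = 0).
  { pose proof (HP n ltac:(lia)) as E. rewrite Vn, Hv1 in E.
    apply (Rmult_eq_reg_l (sin (g / INR n))); auto. lra. }
  destruct (P_root T n ltac:(lia) PN) as [j [Hj Tj]].
  assert (Hgs : g < INR n * PI).
  { destruct (Rlt_le_dec g (INR n * PI)) as [L|L]; auto. exfalso.
    assert (Inc : incl (map (fun i => gi n sigma i ^ 2) (seq 1 (n - 1))) l).
    { intros mu Hmu. apply in_map_iff in Hmu. destruct Hmu as [i [Ei Hi]]. apply in_seq in Hi.
      subst mu. apply Hl. split. apply gi_eig; auto; lia.
      destruct (gi_spec n sigma Hn Hsig i ltac:(lia)) as [A1 A2]. rewrite Hlg. nra. }
    pose proof (NoDup_incl_length (NoDup_L n sigma Hn Hsig (n - 1) ltac:(lia)) Inc) as Len.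
    rewrite length_map, length_seq in Len. lia. }
  assert (Tg : Tf n sigma g = cos (INR j * PI / INR n)) by (rewrite <- HTf; auto).
  assert (Hjm : j = m).
  { set (Lj := map (fun i => gi n sigma i ^ 2) (seq 1 (j - 1))).
    assert (I1 : incl Lj l).
    { intros mu Hmu. apply in_map_iff in Hmu. destruct Hmu as [i [Ei Hi]]. apply in_seq in Hi.
      subst mu. apply Hl. split. apply gi_eig; auto; lia.
      destruct (gi_spec n sigma Hn Hsig i ltac:(lia)) as [A1 A2].
      assert (gi n sigma i < g).
      { apply (Tf_order n sigma Hn Hsig); [exact A1 | lra | rewrite A2, Tg; apply cos_i_decr; lia]. }
      rewrite Hlg. nra. }
    assert (I2 : incl l Lj).
    { intros mu Hmu. apply Hl in Hmu. destruct Hmu as [Hev2 Hlt].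
      destruct (classify n sigma mu Hn Hsig Hev2) as [Hmu0 [Big|[i [Hi Ti]]]].
      - exfalso. assert (sqrt mu < g) by (unfold g; apply sqrt_lt_1; lra). lra.
      - assert (Hsq : 0 < sqrt mu < g) by (split; [apply sqrt_lt_R0; lra | unfold g; apply sqrt_lt_1; lra]).
        assert (Hij : (i < j)%nat).
        { destruct (lt_dec i j) as [L|L]; auto. exfalso.
          assert (TT : Tf n sigma g < Tf n sigma (sqrt mu))
            by (apply Tf_decr; auto; lia || lra).
          rewrite Ti, Tg in TT.
          destruct (Nat.eq_dec i j) as [->|NE]; [lra|].
          pose proof (cos_i_decr n j i ltac:(lia) ltac:(lia) ltac:(lia)). lra. }
        destruct (gi_spec n sigma Hn Hsig i Hi) as [A1 A2].
        assert (Eg : gi n sigma i = sqrt mu).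
        { apply (Tf_inj n sigma); try lia; try lra. }
        apply in_map_iff. exists i. split.
        + rewrite Eg. simpl. rewrite Rmult_1_r, sqrt_sqrt; lra.
        + apply in_seq. lia. }
    pose proof (NoDup_incl_length (NoDup_L n sigma Hn Hsig (j - 1) ltac:(lia)) I1) as L1.
    pose proof (NoDup_incl_length Hnd I2) as L2.
    unfold Lj in L1, L2. rewrite length_map, length_seq in L1, L2. lia. }
  subst j.
  set (th := INR m * PI / INR n) in *.
  pose proof (P_cos th k) as Pc. rewrite <- Tj in Pc.
  assert (Pk : P T k = sin (INR k * th) / sin th) by (apply (Rmult_eq_reg_r (sin th)); [|lra]; rewrite Pc; field; lra).
  rewrite Pk. split.
  - replace (INR k * INR m * PI / INR n) with (INR k * th) by (unfold th; field; lra). field. lra.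
  - replace (INR m * PI * xk n k) with (INR k * th) by (unfold th, xk; field; lra). field. lra.
Qed.
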